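(* Let $d\ge2$, $b:=2^d$, $N\in\mathbb{N}$, $L:=\min\{\ell\ge0:b^\ell\ge N\}$, and assume $L\ge3$. Let $0\le\ell\le L-3$ and $u\in\{0,\dots,b-1\}^\ell$, write $C_u=\prod_{j=1}^d[A_j,A_j+2^{-\ell})$, and let $R_u=\prod_{j=1}^d[a_j,b_j)$ be a half-open rectangle with $\lambda_d(R_u)=M(u)/N$ and \[ |a_j-A_j|\le S_\ell,\qquad |b_j-(A_j+2^{-\ell})|\le S_\ell\qquad(1\le j\le d). \] Then there exist half-open rectangles $\{R_{u\ast v}\}_{v=0}^{b-1}$ such that: (i) they partition $R_u$ up to Lebesgue-null sets; (ii) $\lambda_d(R_{u\ast v})=M(u\ast v)/N$ for every $v$; (iii) writing $C_{u\ast v}=\prod_{j=1}^d[A_{u\ast v,j},A_{u\ast v,j}+2^{-(\ell+1)})$ and $R_{u\ast v}=\prod_{j=1}^d[a_{u\ast v,j},b_{u\ast v,j})$, one has $|a_{u\ast v,j}-A_{u\ast v,j}|\le S_{\ell+1}$ and $|b_{u\ast v,j}-(A_{u\ast v,j}+2^{-(\ell+1)})|\le S_{\ell+1}$ for all $1\le j\le d$.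
   Context: $\lambda_d$ is Lebesgue measure. $u\ast v$ denotes the word $u$ followed by the digit $v$. For $0\le\ell\le L-3$: $\Delta_\ell:=\frac{2^{2d-3}}{N}2^{\ell(d-1)}$, $S_0:=0$, $S_{\ell+1}:=S_\ell+\Delta_\ell$. $M(w):=\#\{1\le n\le N:x_n\in C_w\}$, where: for $a\in\{0,\dots,b-1\}$, $a=\sum_{j=1}^d\varepsilon_j(a)2^{j-1}$ with $\varepsilon_j(a)\in\{0,1\}$; for $m\ge0$, $m=\sum_{k\ge0}a_k(m)b^k$ in base $b$; $x_n:=\bigl(\sum_{k\ge0}\varepsilon_1(a_k(n-1))2^{-(k+1)},\dots,\sum_{k\ge0}\varepsilon_d(a_k(n-1))2^{-(k+1)}\bigr)$; and for a word $w=(w_0,\dots,w_{\ell-1})$, $C_w:=\prod_{j=1}^d\bigl[\sum_{k=0}^{\ell-1}\varepsilon_j(w_k)2^{-(k+1)},\sum_{k=0}^{\ell-1}\varepsilon_j(w_k)2^{-(k+1)}+2^{-\ell}\bigr)$, with $C_\varnothing=[0,1)^d$. *)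

(* Defs.v *)
From HB Require Import structures.
From mathcomp Require Import all_boot all_order all_algebra.
From mathcomp Require Import all_classical all_reals.
Set Implicit Arguments. Unset Strict Implicit. Unset Printing Implicit Defensive.
Import Order.TTheory GRing.Theory Num.Theory.
Local Open Scope classical_set_scope.
Local Open Scope ring_scope.

Section Defs.
Variable R : realType.
Variable d : nat.

(* points of R^d are functions 'I_d -> R; coordinate j : 'I_d is the
   paper's coordinate j+1 *)

Definition box (a b : 'I_d -> R) : set ('I_d -> R) :=
  [set x | forall j, a j <= x j /\ x j < b j].

Definition vol (a b : 'I_d -> R) : R := \prod_(j < d) Num.max (b j - a j) 0.

Definition null (E : set ('I_d -> R)) : Prop :=
  forall e : R, 0 < e -> exists a b : nat -> 'I_d -> R,
    E `<=` \bigcup_(k in [set: nat]) box (a k) (b k) /\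
    forall n, \sum_(k < n) vol (a k) (b k) <= e.

(* eps_j(a): the j-th binary digit of a (paper's eps_{j+1}) *)
Definition eps (j : 'I_d) (a : nat) : nat := ((a %/ 2 ^ j) %% 2)%N.

Definition digit (k m : nat) : nat := ((m %/ (2 ^ d) ^ k) %% 2 ^ d)%N.

(* the point x_n (n >= 1).  The infinite series is truncated to k < n,
   which is exact since a_k(n-1) = 0 for k >= n (as n-1 < b^n). *)
Definition xpt (n : nat) : 'I_d -> R := fun j =>
  \sum_(k < n) (eps j (digit k n.-1))%:R * (2 ^- k.+1).

Definition corner (w : seq nat) : 'I_d -> R := fun j =>
  \sum_(k < size w) (eps j (nth 0%N w k))%:R * (2 ^- k.+1).

Definition cube (w : seq nat) : set ('I_d -> R) :=
  box (corner w) (fun j => corner w j + 2 ^- (size w)).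

Definition Mcount (N : nat) (w : seq nat) : nat :=
  #|[set n : 'I_N | `[< cube w (xpt n.+1) >] ]|.

Definition Delta (N l : nat) : R :=
  (2 ^+ (2 * d - 3)%N) / N%:R * 2 ^+ (l * (d - 1))%N.

Definition Ssum (N l : nat) : R := \sum_(i < l) Delta N i.

End Defs.

(* Main.v *)
Require Import Defs.
From HB Require Import structures.
From mathcomp Require Import all_boot all_order all_algebra.
From mathcomp Require Import all_classical all_reals.
From mathcomp Require Import zify ring lra.
Import Order.TTheory GRing.Theory Num.Theory.
Local Open Scope classical_set_scope.

Local Open Scope nat_scope.
Lemma divn_uniq m d q : q * d <= m < q.+1 * d -> m %/ d = q.
Proof.
move=> /andP[h1 h2]. have dp : 0 < d by case: d h2 {h1} => //; rewrite muln0.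
have -> : m = q * d + (m - q * d) by lia.
rewrite divnMDl // divn_small ?addn0 //. rewrite mulSn in h2. lia.
Qed.

Lemma mod_split m Q B : 0 < Q -> 0 < B -> m %% (Q * B) = m %% Q + Q * (m %/ Q %% B).
Proof.
move=> hQ hB.
have e : m = (m %/ Q %/ B) * (Q * B) + (Q * (m %/ Q %% B) + m %% Q).
  rewrite {1}(divn_eq m Q) {1}(divn_eq (m %/ Q) B). lia.
rewrite {1}e modnMDl modn_small; first lia.
have h1 := ltn_pmod m hQ. have h2 := ltn_pmod (m %/ Q) hB. nia.
Qed.

Definition cnt (Q r N : nat) := count (fun m => m %% Q == r) (iota 0 N).

Lemma dvd_small Q y : 0 < y < 2 * Q -> (Q %| y) = (y == Q).
Proof.
move=> h. apply/idP/eqP => [/dvdnP[k hk]|->]; last exact: dvdnn.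
subst y. have : k = 1 by nia. by move->; rewrite mul1n.
Qed.

Lemma cntE Q r N : 0 < Q -> r < Q -> cnt Q r N = (N + Q - 1 - r) %/ Q.
Proof.
move=> hQ hr. elim: N => [|N IH].
  rewrite /cnt /= divn_small //; lia.
rewrite /cnt -addn1 iotaD count_cat /= addn0 -/(cnt Q r N) IH.
have -> : N + 1 + Q - 1 - r = (N + Q - 1 - r).+1 by lia.
rewrite divnS // addnC; congr (_ + _).
have -> : (N + Q - 1 - r).+1 = (N %/ Q) * Q + (N %% Q + Q - r).
  have := divn_eq N Q; have := ltn_pmod N hQ; nia.
rewrite dvdn_addr ?dvdn_mull // dvd_small; last (have := ltn_pmod N hQ; lia).
apply/eqP/eqP; lia.
Qed.

Lemma cnt_split P r N : 0 < P -> r < P ->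
  cnt P r N = cnt (2 * P) r N + cnt (2 * P) (r + P) N /\
  cnt (2 * P) (r + P) N <= cnt (2 * P) r N <= (cnt (2 * P) (r + P) N).+1.
Proof.
move=> hP hr. rewrite !cntE //; try lia.
set X := N + P - 1 - r.
have -> : N + 2 * P - 1 - r = X + P by rewrite /X; lia.
have -> : N + 2 * P - 1 - (r + P) = X by rewrite /X; lia.
have e := divn_eq X (2 * P). have hs := ltn_pmod X (ltac:(lia) : 0 < 2 * P).
set q := X %/ (2 * P) in e *. set s := X %% (2 * P) in e hs.
case: (ltnP s P) => hsP.
- rewrite (@divn_uniq X P (2 * q)); last (apply/andP; split; nia).
  rewrite (@divn_uniq (X + P) (2 * P) q); last (apply/andP; split; nia).
  lia.
- rewrite (@divn_uniq X P (2 * q).+1); last (apply/andP; split; nia).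
  rewrite (@divn_uniq (X + P) (2 * P) q.+1); last (apply/andP; split; nia).
  lia.
Qed.

Lemma cnt_lb P r N : 0 < P -> r < P -> N < P * (cnt P r N).+1.
Proof.
move=> hP hr. rewrite cntE //. have := ltn_ceil (N + P - 1 - r) hP.
have := leq_div2r P (ltac:(lia) : N <= N + P - 1 - r). nia.
Qed.

Lemma card_count N (p : pred nat) : #|[set n : 'I_N | p (val n)]%SET| = count p (iota 0 N).
Proof.
rewrite -sum1dep_card big_mkcond /=.
rewrite -(big_mkord xpredT (fun n => if p n then 1 else 0)).
elim: N => [|N IH]; first by rewrite big_geq.
rewrite big_nat_recr // IH -(addn1 N) iotaD count_cat /=. by case: (p N); rewrite ?addn0.
Qed.
Lemma uniq_rep P a b y z : a < P -> b < P -> a + P * y = b + P * z -> a = b /\ y = z.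
Proof.
move=> ha hb e. have hP : 0 < P by lia.
have e1 := congr1 (modn^~ P) e. rewrite /= !(addnC a) !(addnC b) !(mulnC P) !modnMDl !modn_small // in e1.
subst b. split => //. move/addnI: e => /eqP. rewrite eqn_mul2l. case/orP=> /eqP; lia.
Qed.

Definition idx (B : nat) (w : seq nat) := \sum_(k < size w) nth 0 w k * B ^ k.

Lemma idx_rcons B w x : idx B (rcons w x) = idx B w + x * B ^ size w.
Proof.
rewrite /idx size_rcons big_ord_recr /= nth_rcons ltnn eqxx; congr (_ + _).
apply: eq_bigr => k _; by rewrite nth_rcons ltn_ord.
Qed.

Lemma idx_lt B w : all (fun x => x < B) w -> idx B w < B ^ size w.
Proof.
elim/last_ind: w => [|w x IH]; first by rewrite /idx big_ord0 expn0.
rewrite all_rcons => /andP[hx /IH h]. rewrite idx_rcons size_rcons expnSr. nia.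
Qed.



Lemma digits_iff B w m : 0 < B -> all (fun x => x < B) w ->
  (forall k, k < size w -> (m %/ B ^ k) %% B = nth 0 w k) <-> m %% B ^ size w = idx B w.
Proof.
move=> hB. elim/last_ind: w => [|w x IH].
  move=> _; rewrite /idx big_ord0 expn0 modn1; split => // _ k; by rewrite ltn0.
rewrite all_rcons => /andP[hx hw]. have hi := @idx_lt B w hw. have {}IH := IH hw.
rewrite size_rcons idx_rcons expnSr mod_split ?expn_gt0 ?hB //.
split.
- move=> h. have e1 : m %% B ^ size w = idx B w.
    apply/IH => k hk. rewrite h; last lia. by rewrite nth_rcons hk.
  have := h (size w) (ltnSn _). rewrite nth_rcons ltnn eqxx => ->. rewrite e1. lia.
- move=> e. rewrite (mulnC x) in e. have := @uniq_rep (B ^ size w) (m %% B ^ size w) (idx B w) (m %/ B ^ size w %% B) x.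
  rewrite ltn_pmod ?expn_gt0 ?hB // hi => /(_ isT isT e) [e1 e2] k hk.
  rewrite nth_rcons. case: (ltngtP k (size w)) => hk'.
  + by move/IH: e1 => ->.
  + lia.
  + by subst k.
Qed.

Lemma bits_eq d a b : a < 2 ^ d -> b < 2 ^ d ->
  (forall j, j < d -> (a %/ 2 ^ j) %% 2 = (b %/ 2 ^ j) %% 2) -> a = b.
Proof.
move=> ha hb h. suff: forall j, j <= d -> a %% 2 ^ j = b %% 2 ^ j.
  by move/(_ d (leqnn d)); rewrite !modn_small.
elim=> [|j IH] hj; first by rewrite !modn1.
rewrite expnSr !mod_split ?expn_gt0 // IH ?h //; lia.
Qed.

Local Open Scope ring_scope.
Section Real.
Variable R : realType.

Definition Sb (be : nat -> nat) n : R := \sum_(k < n) (be k)%:R * 2 ^- k.+1.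
Fixpoint nb (be : nat -> nat) n : nat := match n with 0 => 0 | n.+1 => 2 * nb be n + be n end%N.

Lemma Sb_nb be n : Sb be n * 2 ^+ n = (nb be n)%:R.
Proof.
elim: n => [|n IH]; first by rewrite /Sb big_ord0 mul0r.
rewrite /Sb big_ord_recr /= -/(Sb be n) exprSr mulrDl mulrA IH.
rewrite -(exprSr 2 n) -mulrA mulVf ?expf_neq0 ?pnatr_eq0 // mulr1 natrD natrM. ring.
Qed.

Lemma Sb_S be n : Sb be n.+1 = Sb be n + (be n)%:R * 2 ^- n.+1.
Proof. by rewrite /Sb big_ord_recr. Qed.

Lemma Sb_tail be l n : (forall k, be k <= 1)%N ->
  Sb be l <= Sb be (l + n) <= Sb be l + 2 ^- l - 2 ^- (l + n).
Proof.
move=> hb. elim: n => [|n IH]; first by rewrite addn0 lexx /= addrK.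
rewrite addnS Sb_S.
set e : R := 2 ^- (l + n).+1.
have he : 2 ^- (l + n) = 2 * e by rewrite /e exprS invfM mulrA divff ?mul1r // pnatr_eq0.
have e0 : 0 < e by rewrite /e invr_gt0 exprn_gt0.
have hbe : 0 <= (be (l + n))%:R * e <= e.
  apply/andP; split; first by rewrite mulr_ge0 // ltW.
  have := hb (l + n); rewrite -(ler_nat R) => h.
  by have := ler_wpM2r (ltW e0) h; rewrite mul1r.
move: IH hbe; rewrite he. lra.
Qed.

Lemma Sb_zero be n p : (forall k, (n <= k)%N -> be k = 0%N) -> Sb be (n + p) = Sb be n.
Proof.
move=> hb. elim: p => [|p IH]; first by rewrite addn0.
by rewrite addnS Sb_S IH hb ?leq_addr // mul0r addr0.
Qed.

Lemma nb_inj al be n : (forall k, al k <= 1)%N -> (forall k, be k <= 1)%N ->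
  nb al n = nb be n -> forall k, (k < n)%N -> al k = be k.
Proof.
move=> ha hb. elim: n => [|n IH] //= e k hk.
have h1 := ha n. have h2 := hb n.
have [e1 e2] : nb al n = nb be n /\ al n = be n by lia.
case: (ltngtP k n) => hkn; [exact: IH | lia | by subst k].
Qed.

Lemma Sb_int al be l (x : R) : Sb al l <= x < Sb al l + 2 ^- l ->
  Sb be l <= x < Sb be l + 2 ^- l -> nb al l = nb be l.
Proof.
have p0 : 0 < (2 : R) ^+ l by rewrite exprn_gt0.
have key : forall g, (Sb g l + 2 ^- l) * 2 ^+ l = (nb g l)%:R + 1.
  by move=> g; rewrite mulrDl Sb_nb mulVf // gt_eqF.
move=> /andP[a1 a2] /andP[b1 b2].
have c1 : Sb al l * 2 ^+ l <= x * 2 ^+ l by rewrite ler_pM2r.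
have c2 : x * 2 ^+ l < (Sb al l + 2 ^- l) * 2 ^+ l by rewrite ltr_pM2r.
have c3 : Sb be l * 2 ^+ l <= x * 2 ^+ l by rewrite ler_pM2r.
have c4 : x * 2 ^+ l < (Sb be l + 2 ^- l) * 2 ^+ l by rewrite ltr_pM2r.
rewrite !key !Sb_nb in c1 c2 c3 c4.
have d1 : ((nb al l)%:R < (nb be l).+1%:R :> R) by rewrite -addn1 natrD; lra.
have d2 : ((nb be l)%:R < (nb al l).+1%:R :> R) by rewrite -addn1 natrD; lra.
rewrite ltr_nat in d1; rewrite ltr_nat in d2. lia.
Qed.

Lemma cube_iff d w m : (0 < d)%N -> all (fun x => x < 2 ^ d)%N w ->
  cube w (xpt R (d:=d) m.+1) <-> (m %% (2 ^ d) ^ size w = idx (2 ^ d) w)%N.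
Proof.
move=> hd hw. rewrite -digits_iff ?expn_gt0 //.
set l := size w.
have hx : forall j : 'I_d,
    Sb (fun k => eps j (digit d k m)) l <= xpt R (d:=d) m.+1 j <
    Sb (fun k => eps j (digit d k m)) l + 2 ^- l.
  move=> j. set be := fun k => _.
  have -> : xpt R (d:=d) m.+1 j = Sb be m.+1 by [].
  have bz : forall k, (m.+1 <= k)%N -> be k = 0%N.
    move=> k hk. rewrite /be /digit (@divn_small m); first by rewrite mod0n /eps div0n mod0n.
    apply: (@ltn_trans k); first lia. apply: ltn_expl.
    have : (2 ^ 1 <= 2 ^ d)%N by rewrite leq_exp2l.
    by rewrite expn1.
  have b1 : forall k, (be k <= 1)%N.
    by move=> k; rewrite /be /eps -ltnS ltn_pmod.
  have ep : 0 < (2:R) ^- l by rewrite invr_gt0 exprn_gt0.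
  case: (leqP l m.+1) => hl.
  - have := Sb_tail be l (m.+1 - l) b1. rewrite (subnKC hl) => /andP[h1 h2].
    have h3 : 0 < (2:R) ^- m.+1 by rewrite invr_gt0 exprn_gt0.
    rewrite h1 andTb. apply: (le_lt_trans h2). by rewrite ltrBlDr ltrDl.
  - have := Sb_zero be (m.+1) (l - m.+1) bz. rewrite (subnKC (ltnW hl)) => ->.
    by rewrite lexx andTb ltrDl.
split.
- move=> hc k hk.
  have hn : (nth 0%N w k < 2 ^ d)%N by have := allP hw (nth 0%N w k) (mem_nth 0%N hk).
  apply: (bits_eq d); first by rewrite ltn_pmod ?expn_gt0.
    exact: hn.
  move=> j hj. set j' : 'I_d := Ordinal hj.
  have hc' : Sb (fun k => eps j' (nth 0%N w k)) l <= xpt R (d:=d) m.+1 j' <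
              Sb (fun k => eps j' (nth 0%N w k)) l + 2 ^- l.
    by have [h1 h2] := hc j'; apply/andP; split.
  have e := Sb_int _ _ _ _ hc' (hx j').
  have b2 : forall a, (eps j' a <= 1)%N.
    by move=> a; rewrite /eps -ltnS ltn_pmod.
  symmetry; exact: (nb_inj _ _ _ (fun k => b2 _) (fun k => b2 _) e _ hk).
- move=> hdig j.
  have e : Sb (fun k => eps j (nth 0%N w k)) l = Sb (fun k => eps j (digit d k m)) l.
    by apply: eq_bigr => k _; rewrite /digit hdig.
  have [h1 h2] := andP (hx j). rewrite -e in h1 h2. by split.
Qed.

Lemma Mcount_cnt d N w : (0 < d)%N -> all (fun x => x < 2 ^ d)%N w ->
  Mcount R d N w = cnt ((2 ^ d) ^ size w) (idx (2 ^ d) w) N.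
Proof.
move=> hd hw. rewrite /Mcount /cnt -card_count. apply: eq_card => n.
apply/idP/idP => h.
- have hc : cube w (xpt R (d:=d) n.+1) by move: h => /asboolP /asboolP.
  have e := proj1 (cube_iff d w n hd hw) hc. by rewrite inE /= e eqxx.
- move: h; rewrite inE => /eqP e.
  apply/asboolP; apply/asboolP; exact: (proj2 (cube_iff d w n hd hw) e).
Qed.

Lemma key_bound (a c b h rho S D : R) : `|a - c| <= S -> `|b - (c + 2 * h)| <= S ->
  0 <= rho <= 1 -> 0 <= 2 * h * (rho - 2^-1) <= D ->
  `|a + (b - a) * rho - (c + h)| <= S + D.
Proof.
rewrite !ler_norml => /andP[h1 h2] /andP[h3 h4] /andP[r0 r1] /andP[h5 h6].
have e : a + (b - a) * rho - (c + h) = (1 - rho) * (a - c) + rho * (b - (c + 2 * h)) + 2 * h * (rho - 2^-1).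
  by field.
rewrite e.
have r2 : 0 <= 1 - rho by lra.
have p1 : (1 - rho) * (a - c) <= (1 - rho) * S by rewrite ler_wpM2l.
have p2 : (1 - rho) * (- S) <= (1 - rho) * (a - c) by rewrite ler_wpM2l.
have p3 : rho * (b - (c + 2 * h)) <= rho * S by rewrite ler_wpM2l.
have p4 : rho * (- S) <= rho * (b - (c + 2 * h)) by rewrite ler_wpM2l.
apply/andP; split; nra.
Qed.

Lemma tele (f : nat -> R) n : (forall j, (j <= n)%N -> f j != 0) ->
  \prod_(j < n) (f j.+1 / f j) = f n / f 0%N.
Proof.
elim: n => [|n IH] hf; first by rewrite big_ord0 divff // hf.
rewrite big_ord_recr /= IH; last by move=> j hj; apply: hf; lia.
have h1 := hf n (leqnSn n). have h0 := hf 0%N (leq0n _).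
by field; apply/andP; split.
Qed.

Lemma null_empty d (E : set ('I_d -> R)) : (0 < d)%N -> (forall x, ~ E x) -> null E.
Proof.
move=> hd hE e he. exists (fun _ _ => 0), (fun _ _ => 0). split.
  by move=> x /hE.
move=> n. rewrite big1 ?ltW // => k _. rewrite /vol.
clear hE E. case: d hd => // d' _. by rewrite big_ord_recl subrr maxxx mul0r.
Qed.

Lemma corner_rcons d w x (j : 'I_d) :
  corner R (rcons w x) j = corner R w j + (eps j x)%:R * 2 ^- (size w).+1.
Proof.
rewrite /corner size_rcons big_ord_recr /= nth_rcons ltnn eqxx. congr (_ + _).
apply: eq_bigr => k _. by rewrite nth_rcons ltn_ord.
Qed.

End Real.

Local Open Scope nat_scope.
Definition Pf B l j := B ^ l * 2 ^ j.
Definition rf B l iu v j := iu + (v %% 2 ^ j) * B ^ l.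
Definition Kf B l iu N v j := cnt (Pf B l j) (rf B l iu v j) N.
Definition K0f B l iu N v j := cnt (Pf B l j.+1) (rf B l iu v j) N.
Definition K1f B l iu N v j := cnt (Pf B l j.+1) (rf B l iu v j + Pf B l j) N.
Definition bitn v j := (v %/ 2 ^ j) %% 2.

Section K.
Variables (B l iu N : nat).
Hypotheses (hB : 0 < B) (hiu : iu < B ^ l).

Lemma Pf_gt0 j : 0 < Pf B l j.
Proof. by rewrite /Pf muln_gt0 !expn_gt0 hB. Qed.

Lemma PfS j : Pf B l j.+1 = 2 * Pf B l j.
Proof. by rewrite /Pf expnS mulnCA. Qed.

Lemma rf_lt v j : rf B l iu v j < Pf B l j.
Proof.
rewrite /rf /Pf. have h2 : v %% 2 ^ j < 2 ^ j by rewrite ltn_pmod // expn_gt0.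
nia.
Qed.

Lemma Kf_split v j : Kf B l iu N v j = K0f B l iu N v j + K1f B l iu N v j /\
  K1f B l iu N v j <= K0f B l iu N v j <= (K1f B l iu N v j).+1.
Proof. rewrite /Kf /K0f /K1f PfS. exact: cnt_split (Pf_gt0 j) (rf_lt v j). Qed.

Lemma bitn_le1 v j : bitn v j <= 1.
Proof. by rewrite /bitn -ltnS ltn_pmod. Qed.

Lemma Kf_step v j : Kf B l iu N v j.+1 = if bitn v j == 0 then K0f B l iu N v j else K1f B l iu N v j.
Proof.
rewrite /Kf /K0f /K1f /rf expnSr mod_split ?expn_gt0 // -/(bitn v j).
have := bitn_le1 v j.
case: ifP => /eqP hb h1.
- by rewrite hb muln0 addn0.
- have -> : bitn v j = 1 by lia.
  rewrite muln1 /Pf mulnDl addnA (mulnC (2 ^ j)). by [].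
Qed.

Lemma Kf_lb v j : N < Pf B l j * (Kf B l iu N v j).+1.
Proof. exact: cnt_lb (Pf_gt0 j) (rf_lt v j). Qed.

Lemma Kf0 v : Kf B l iu N v 0 = cnt (B ^ l) iu N.
Proof. by rewrite /Kf /Pf /rf expn0 muln1 modn1 mul0n addn0. Qed.

Lemma Kfd d v : B = 2 ^ d -> v < 2 ^ d -> Kf B l iu N v d = cnt (B ^ l.+1) (iu + v * B ^ l) N.
Proof. move=> eB hv. rewrite /Kf /Pf /rf expnSr eB modn_small //. Qed.

Lemma rf_dep v w j : v %% 2 ^ j = w %% 2 ^ j -> rf B l iu v j = rf B l iu w j.
Proof. by rewrite /rf => ->. Qed.

Lemma bitn_mod v j : bitn v j = (v %% 2 ^ j.+1) %/ 2 ^ j.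
Proof.
rewrite expnSr mod_split ?expn_gt0 // -/(bitn v j) addnC mulnC divnMDl ?expn_gt0 //.
by rewrite divn_small ?addn0 // ltn_pmod // expn_gt0.
Qed.

Lemma mod_step v w j : v %% 2 ^ j = w %% 2 ^ j -> bitn v j = bitn w j -> v %% 2 ^ j.+1 = w %% 2 ^ j.+1.
Proof. by move=> e1 e2; rewrite expnSr !mod_split ?expn_gt0 // -/(bitn v j) -/(bitn w j) e1 e2. Qed.

Lemma mod_lower v w j k : j <= k -> v %% 2 ^ k = w %% 2 ^ k -> v %% 2 ^ j = w %% 2 ^ j.
Proof.
move=> hjk e. have hd : 2 ^ j %| 2 ^ k by rewrite dvdn_exp2l.
by rewrite -(modn_dvdm v hd) -(modn_dvdm w hd) e.
Qed.

Lemma bits_first_diff d v w : v < 2 ^ d -> w < 2 ^ d -> v <> w ->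
  exists j, [/\ j < d, v %% 2 ^ j = w %% 2 ^ j & bitn v j <> bitn w j].
Proof.
move=> hv hw hvw.
suff : forall k, k <= d -> v %% 2 ^ k = w %% 2 ^ k \/
    exists j, [/\ j < k, v %% 2 ^ j = w %% 2 ^ j & bitn v j <> bitn w j].
  case/(_ d (leqnn d)) => [|[j [h1 h2 h3]]]; last by exists j.
  by rewrite !modn_small.
elim=> [|k IH] hk; first by left; rewrite !modn1.
case: (IH (ltnW hk)) => [e|[j [h1 h2 h3]]]; last by right; exists j; split => //; lia.
case: (eqVneq (bitn v k) (bitn w k)) => eb.
- by left; apply: mod_step.
- by right; exists k; split => //; apply/eqP.
Qed.

Lemma mod_add_high v k c j : j < k -> (v + 2 ^ k * c) %% 2 ^ j.+1 = v %% 2 ^ j.+1.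
Proof.
move=> hjk. have -> : 2 ^ k = 2 ^ (k - j.+1) * 2 ^ j.+1 by rewrite -expnD subnK.
by rewrite mulnAC addnC modnMDl.
Qed.

End K.

Local Open Scope classical_set_scope.
Local Open Scope ring_scope.

Section Main.
Variable R : realType.
Variables (d : nat) (a b : 'I_d -> R) (B l iu N : nat).

Definition ttf v (j : 'I_d) : R :=
  a j + (b j - a j) * ((K0f B l iu N v j)%:R / (Kf B l iu N v j)%:R).
Definition avf v (j : 'I_d) : R := if bitn v j == 0%N then a j else ttf v j.
Definition bvf v (j : 'I_d) : R := if bitn v j == 0%N then ttf v j else b j.

Hypotheses (hB : (0 < B)%N) (hiu : (iu < B ^ l)%N).
Hypothesis Kpos : forall v (j : nat), (j <= d)%N -> (0 < Kf B l iu N v j)%N.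
Hypothesis hab : forall j, a j < b j.

Lemma ttf_dep v w (j : 'I_d) : (v %% 2 ^ j = w %% 2 ^ j)%N -> ttf v j = ttf w j.
Proof. by move=> e; rewrite /ttf /K0f /Kf (rf_dep _ _ _ _ _ _ e). Qed.

Lemma rho01 v (j : 'I_d) : 0 <= ((K0f B l iu N v j)%:R : R) / (Kf B l iu N v j)%:R <= 1.
Proof.
have [e /andP[h1 h2]] := Kf_split B l iu N hB hiu v j.
have kp : (0 < (Kf B l iu N v j)%:R :> R) by rewrite ltr0n Kpos // ltnW.
rewrite divr_ge0 ?ler0n //= ler_pdivrMr // mul1r ler_nat e. lia.
Qed.

Lemma ttf_in v (j : 'I_d) : a j <= ttf v j <= b j.
Proof.
have /andP[r0 r1] := rho01 v j. have := hab j. rewrite /ttf.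
set r := _ / _. move=> h.
have h1 : 0 <= (b j - a j) * r by rewrite mulr_ge0 // subr_ge0 ltW.
have h2 : (b j - a j) * r <= (b j - a j) * 1 by rewrite ler_wpM2l // subr_ge0 ltW.
rewrite mulr1 in h2. apply/andP; split; lra.
Qed.

Lemma len v (j : 'I_d) : bvf v j - avf v j =
  (b j - a j) * ((Kf B l iu N v j.+1)%:R / (Kf B l iu N v j)%:R).
Proof.
have [e _] := Kf_split B l iu N hB hiu v j.
have kp : ((Kf B l iu N v j)%:R != 0 :> R) by rewrite pnatr_eq0 -lt0n Kpos // ltnW.
rewrite /bvf /avf /ttf (Kf_step B l iu N hB hiu). case: ifP => _.
- ring.
- move: kp; rewrite e natrD => kp. field. exact: kp.
Qed.

Lemma avf_dep v w (j : 'I_d) : (v %% 2 ^ j.+1 = w %% 2 ^ j.+1)%N ->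
  avf v j = avf w j /\ bvf v j = bvf w j.
Proof.
move=> e. have eb : bitn v j = bitn w j by rewrite !bitn_mod e.
have e' := mod_lower v w j j.+1 (leqnSn j) e.
by rewrite /avf /bvf eb (ttf_dep _ _ _ e').
Qed.

Lemma sub_box v x : box (avf v) (bvf v) x -> box a b x.
Proof.
move=> hx j; have [h1 h2] := hx j; have /andP[t1 t2] := ttf_in v j.
rewrite /avf /bvf in h1 h2; case: ifP h1 h2 => _ h1 h2; split.
- exact: h1.
- exact: lt_le_trans h2 t2.
- exact: le_trans t1 h1.
- exact: h2.
Qed.

Lemma exists_box x : box a b x -> exists v : 'I_(2 ^ d), box (avf v) (bvf v) x.
Proof.
move=> hx.
suff: forall k, (k <= d)%N -> exists v, (v < 2 ^ k)%N /\
    forall j : 'I_d, (j < k)%N -> avf v j <= x j /\ x j < bvf v j.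
  case/(_ d (leqnn d)) => v [hv hj]. exists (Ordinal hv) => j. exact: hj.
elim=> [|k IH] hk.
  exists 0%N; split => // j; by rewrite ltn0.
have [v [hv hj]] := IH (ltnW hk).
set j0 : 'I_d := Ordinal hk.
set c := if x j0 < ttf v j0 then 0%N else 1%N.
have c1 : (c <= 1)%N by rewrite /c; case: ifP.
exists (v + 2 ^ k * c)%N; split.
  rewrite expnS. nia.
move=> j hjk. case: (ltngtP j k) => hjk'.
- have := avf_dep (v + 2 ^ k * c) v j (mod_add_high v k c j hjk').
  case=> -> ->. exact: hj.
- lia.
- have ej : j = j0 by apply: val_inj.
  have hm : ((v + 2 ^ k * c) %% 2 ^ k = v %% 2 ^ k)%N by rewrite addnC mulnC modnMDl.
  have hb : bitn (v + 2 ^ k * c) k = c.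
    rewrite /bitn addnC mulnC divnMDl ?expn_gt0 // (divn_small hv) addn0 modn_small //; lia.
  rewrite ej. have ht := ttf_dep _ _ j0 hm.
  have [ha hb'] := hx j0.
  rewrite /avf /bvf /= hb ht /c. case hlt: (x j0 < ttf v j0) => /=.
  + by split.
  + split => //. by rewrite leNgt hlt.
Qed.

Lemma disj (v w : 'I_(2 ^ d)) x : v != w ->
  ~ (box (avf v) (bvf v) x /\ box (avf w) (bvf w) x).
Proof.
move=> hvw [hv hw].
have [j [hj e hbit]] := bits_first_diff B l iu hB hiu d v w (ltn_ord v) (ltn_ord w)
  (fun h => (negP hvw) (introT eqP (val_inj h))).
set j0 : 'I_d := Ordinal hj.
have ht := ttf_dep _ _ j0 e.
have [v1 v2] := hv j0. have [w1 w2] := hw j0.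
move: v1 v2 w1 w2. rewrite /avf /bvf /= ht.
have := bitn_le1 v j. have := bitn_le1 w j.
case: (eqVneq (bitn v j) 0%N) => bv; case: (eqVneq (bitn w j) 0%N) => bw.
- by move: hbit; rewrite bv bw.
- move=> _ _ _ h1 h2 _. have := lt_le_trans h1 h2. by rewrite ltxx.
- move=> _ _ h1 _ _ h2. have := lt_le_trans h2 h1. by rewrite ltxx.
- lia.
Qed.

Lemma vol_sub v : vol (avf v) (bvf v) = vol a b * ((Kf B l iu N v d)%:R / (Kf B l iu N v 0)%:R).
Proof.
have kp : forall j, (j <= d)%N -> (0 < (Kf B l iu N v j)%:R :> R) by move=> j hj; rewrite ltr0n Kpos.
rewrite /vol.
rewrite (eq_bigr (fun j : 'I_d => (b j - a j) * ((Kf B l iu N v j.+1)%:R / (Kf B l iu N v j)%:R))); last first.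
  move=> j _. rewrite len max_l //. apply: mulr_ge0; first by rewrite subr_ge0 ltW.
  by apply: divr_ge0; rewrite ler0n.
rewrite big_split /=. congr (_ * _).
  apply: eq_bigr => j _. by rewrite max_l // subr_ge0 ltW.
rewrite (tele R (fun j => (Kf B l iu N v j)%:R)) //.
move=> j hj. by rewrite gt_eqF // kp.
Qed.

Lemma delta_bound v (j : nat) : (2 <= d)%N -> (0 < N)%N ->
  (N <= 2 ^ (l * d + 2 * d - 2) * Kf B l iu N v j)%N ->
  2 ^- l / (2 * (Kf B l iu N v j)%:R) <= Delta R d N l.
Proof.
move=> hd N0 hK. set K := Kf B l iu N v j in hK *.
have K0 : (0 < K)%N by case: K hK => //; rewrite muln0; lia.
have kp : (0 < K%:R :> R) by rewrite ltr0n.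
have hN : (N%:R : R) <= 2 ^+ (l * d + 2 * d - 2) * K%:R.
  by rewrite -natrX -natrM ler_nat.
have ee : (l * d + 2 * d - 2 = (2 * d - 3) + l * (d - 1) + l + 1)%N.
  have : (l <= l * d)%N by rewrite leq_pmulr; lia.
  rewrite mulnBr muln1. lia.
rewrite ee !exprD expr1 in hN.
rewrite /Delta. set E1 : R := 2 ^+ (2 * d - 3). set E2 : R := 2 ^+ (l * (d - 1)).
rewrite mulrAC ler_pdivlMr ?ltr0n //.
have p0 : 0 <= (2:R) ^- l / (2 * K%:R).
  by rewrite divr_ge0 // ?invr_ge0 ?exprn_ge0 // mulr_ge0 // ler0n.
apply: le_trans (ler_wpM2l p0 hN) _.
rewrite le_eqVlt; apply/orP; left; apply/eqP.
have h2 : (2:R) ^+ l != 0 by rewrite expf_neq0 // pnatr_eq0.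
have hk : (K%:R : R) != 0 by rewrite gt_eqF.
rewrite /E1 /E2. field. by rewrite hk h2.
Qed.

Lemma bound v (j : 'I_d) (c S D : R) :
  `|a j - c| <= S -> `|b j - (c + 2 ^- l)| <= S -> 0 <= D ->
  2 ^- l / (2 * (Kf B l iu N v j)%:R) <= D ->
  `|avf v j - (c + (bitn v j)%:R * 2 ^- l.+1)| <= S + D /\
  `|bvf v j - (c + (bitn v j)%:R * 2 ^- l.+1 + 2 ^- l.+1)| <= S + D.
Proof.
move=> h1 h2 D0 hD.
set h : R := 2 ^- l.+1.
have eh : (2:R) ^- l = 2 * h by rewrite /h exprS invfM mulrA divff ?mul1r // pnatr_eq0.
have [e /andP[k1 k2]] := Kf_split B l iu N hB hiu v j.
set K := Kf B l iu N v j in e hD *. set K0 := K0f B l iu N v j in e k1 k2 *.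
set K1 := K1f B l iu N v j in e k1 k2 *.
have kp : (0 < K%:R :> R) by rewrite ltr0n Kpos // ltnW.
have hK : (K%:R : R) != 0 by rewrite gt_eqF.
have r01 := rho01 v j. rewrite -/K -/K0 in r01.
have key : 0 <= 2 * h * ((K0%:R : R) / K%:R - 2^-1) <= D.
  have er : (K0%:R : R) / K%:R - 2^-1 = ((K0%:R : R) - K1%:R) / (2 * K%:R).
    move: hK. rewrite e natrD => hK. field. by rewrite hK.
  have d0 : 0 <= (K0%:R : R) - K1%:R by rewrite subr_ge0 ler_nat.
  have d1 : (K0%:R : R) - K1%:R <= 1.
    have : (K0%:R : R) <= (K1.+1)%:R by rewrite ler_nat.
    rewrite -addn1 natrD. lra.
  rewrite er. have h0 : 0 <= 2 * h by rewrite -eh invr_ge0 exprn_ge0.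
  have q0 : 0 <= 2 * (K%:R : R) by rewrite mulr_ge0 // ltW.
  apply/andP; split; first by rewrite mulr_ge0 // divr_ge0.
  have h0' : 0 < 2 * h by rewrite -eh invr_gt0 exprn_gt0.
  apply: le_trans hD. rewrite eh ler_pM2l //.
  rewrite ler_pdivrMr ?mulr_gt0 // mulVf ?gt_eqF ?mulr_gt0 //.
have h2' : `|b j - (c + 2 * h)| <= S by rewrite -eh.
have kb := key_bound R (a j) c (b j) h (K0%:R / K%:R) S D h1 h2' r01 key.
have SD : S <= S + D by rewrite lerDl.
have ha : `|a j - c| <= S + D by apply: le_trans h1 SD.
have hb2 : `|b j - (c + 2 * h)| <= S + D by apply: le_trans h2' SD.
rewrite /avf /bvf /ttf -/K -/K0.
have := bitn_le1 v j. case: (eqVneq (bitn v j) 0%N) => hbit hle.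
- rewrite hbit /= mul0r addr0. by split.
- move: hbit hle. case: (bitn v j) => [|[|n]] // _ _.
  rewrite /= mul1r. split => //.
  by have -> : c + h + h = c + 2 * h by ring.
Qed.

Lemma core (u : seq nat) :
  (2 <= d)%N -> B = (2 ^ d)%N -> size u = l -> all (fun x => x < 2 ^ d)%N u ->
  iu = idx B u -> (0 < N)%N ->
  (forall v j, (j < d)%N -> (N <= 2 ^ (l * d + 2 * d - 2) * Kf B l iu N v j)%N) ->
  vol a b = (Mcount R d N u)%:R / N%:R ->
  (forall j, `|a j - corner R u j| <= Ssum R d N l /\
             `|b j - (corner R u j + 2 ^- l)| <= Ssum R d N l) ->
  exists av bv : 'I_(2 ^ d) -> 'I_d -> R,
    [/\ null (box a b `\` \bigcup_(v in [set: 'I_(2 ^ d)]) box (av v) (bv v)),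
        null ((\bigcup_(v in [set: 'I_(2 ^ d)]) box (av v) (bv v)) `\` box a b),
        (forall v w : 'I_(2 ^ d), v != w ->
           null (box (av v) (bv v) `&` box (av w) (bv w))),
        (forall v : 'I_(2 ^ d),
           vol (av v) (bv v) = (Mcount R d N (rcons u v))%:R / N%:R) &
        (forall (v : 'I_(2 ^ d)) (j : 'I_d),
           `|av v j - corner R (rcons u v) j| <= Ssum R d N l.+1 /\
           `|bv v j - (corner R (rcons u v) j + 2 ^- l.+1)| <= Ssum R d N l.+1)].
Proof.
move=> hd2 eB hsz hu eiu N0 Kbig hvol hbd.
have d0 : (0 < d)%N by apply: leq_trans hd2.
exists (fun v j => avf v j), (fun v j => bvf v j). split.
- apply: null_empty => // x [hx hn]. have [v hv] := exists_box x hx. apply: hn. by exists v.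
- apply: null_empty => // x [[v _ hv] hn]. exact: hn (sub_box v x hv).
- move=> v w hvw. apply: null_empty => // x [h1 h2]. exact: disj v w x hvw (conj h1 h2).
- move=> v. rewrite vol_sub hvol.
  have hM0 : Mcount R d N u = Kf B l iu N v 0 by rewrite Kf0 Mcount_cnt // hsz eiu eB.
  have hMv : Mcount R d N (rcons u v) = Kf B l iu N v d.
    rewrite (Kfd B l iu N d v eB (ltn_ord v)) Mcount_cnt //; last by rewrite all_rcons ltn_ord hu.
    by rewrite size_rcons hsz idx_rcons hsz eiu eB.
  rewrite hM0 hMv.
  have k0 : ((Kf B l iu N v 0)%:R : R) != 0 by rewrite pnatr_eq0 -lt0n Kpos.
  have n0 : (N%:R : R) != 0 by rewrite pnatr_eq0 -lt0n.
  field. by rewrite k0 n0.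
- move=> v j. rewrite corner_rcons hsz.
  change (eps j v) with (bitn v j).
  have eS : Ssum R d N l.+1 = Ssum R d N l + Delta R d N l by rewrite /Ssum big_ord_recr.
  have D0 : 0 <= Delta R d N l.
    by rewrite /Delta mulr_ge0 ?divr_ge0 ?exprn_ge0 ?ler0n.
  have [h1 h2] := hbd j.
  rewrite eS. exact: bound v j _ _ _ h1 h2 D0 (delta_bound v j hd2 N0 (Kbig v j (ltn_ord j))).
Qed.

End Main.

Theorem lemma2p8 (R : realType) (d N L l : nat) (u : seq nat)
  (a b : 'I_d -> R) :
  (2 <= d)%N ->
  (* L = min { l >= 0 : b^l >= N } with b = 2^d *)
  (N <= (2 ^ d) ^ L)%N ->
  (forall m, (N <= (2 ^ d) ^ m)%N -> (L <= m)%N) ->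
  (3 <= L)%N ->
  (l <= L - 3)%N ->
  size u = l ->
  all (fun x => x < 2 ^ d)%N u ->
  vol a b = (Mcount R d N u)%:R / N%:R ->
  (forall j, `|a j - corner R u j| <= Ssum R d N l /\
             `|b j - (corner R u j + 2 ^- l)| <= Ssum R d N l) ->
  exists av bv : 'I_(2 ^ d) -> 'I_d -> R,
    [/\ null (box a b `\` \bigcup_(v in [set: 'I_(2 ^ d)]) box (av v) (bv v)),
        null ((\bigcup_(v in [set: 'I_(2 ^ d)]) box (av v) (bv v)) `\` box a b),
        (forall v w : 'I_(2 ^ d), v != w ->
           null (box (av v) (bv v) `&` box (av w) (bv w))),
        (forall v : 'I_(2 ^ d),
           vol (av v) (bv v) = (Mcount R d N (rcons u v))%:R / N%:R) &
        (forall (v : 'I_(2 ^ d)) (j : 'I_d),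
           `|av v j - corner R (rcons u v) j| <= Ssum R d N l.+1 /\
           `|bv v j - (corner R (rcons u v) j + 2 ^- l.+1)| <= Ssum R d N l.+1)].
Proof.
move=> hd hNL hmin hL3 hlL hsz hu.
have B1 : (2 ^ 1 <= 2 ^ d)%N by rewrite leq_exp2l //; lia.
rewrite expn1 in B1.
have hNb : ((2 ^ d) ^ l.+2 < N)%N.
  have h1 : ((2 ^ d) ^ L.-1 < N)%N.
    rewrite ltnNge; apply/negP => h; have := hmin _ h; lia.
  apply: leq_ltn_trans h1. rewrite leq_exp2l //; lia.
have hiu : (idx (2 ^ d) u < (2 ^ d) ^ l)%N by rewrite -hsz; apply: idx_lt.
have N0 : (0 < N)%N by lia.
have Pbound : forall j, (j <= d)%N -> (Pf (2 ^ d) l j < N)%N.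
  move=> j hj. apply: leq_ltn_trans hNb. rewrite /Pf !expnSr.
  have : (2 ^ j <= 2 ^ d)%N by rewrite leq_exp2l.
  move: B1. generalize ((2 ^ d) ^ l)%N (2 ^ j)%N (2 ^ d)%N => X J Y hY hJ.
  rewrite -mulnA; apply: leq_mul => //. apply: leq_trans hJ _. apply: leq_pmulr. lia.
have Kpos : forall v j, (j <= d)%N -> (0 < Kf (2 ^ d) l (idx (2 ^ d) u) N v j)%N.
  move=> v j hj. have h := Kf_lb (2 ^ d) l (idx (2 ^ d) u) N (ltnW B1) hiu v j.
  have hP := Pbound j hj.
  rewrite lt0n; apply/negP => /eqP e. rewrite e muln1 in h. lia.
have Kbig : forall v j, (j < d)%N ->
    (N <= 2 ^ (l * d + 2 * d - 2) * Kf (2 ^ d) l (idx (2 ^ d) u) N v j)%N.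
  move=> v j hj. have h := Kf_lb (2 ^ d) l (idx (2 ^ d) u) N (ltnW B1) hiu v j.
  have hk := Kpos v j (ltnW hj).
  have hP : (Pf (2 ^ d) l j <= 2 ^ (l * d + d - 1))%N.
    rewrite /Pf -expnM -expnD leq_exp2l //.
    have : (d * l = l * d)%N by rewrite mulnC. lia.
  have e2 : (2 ^ (l * d + 2 * d - 2) = 2 ^ (l * d + d - 1) * 2 ^ (d - 1))%N.
    rewrite -expnD. have -> : (l * d + d - 1 + (d - 1) = l * d + 2 * d - 2)%N by lia. by [].
  have h3 : (2 <= 2 ^ (d - 1))%N by rewrite -{1}(expn1 2) leq_exp2l //; lia.
  rewrite e2. move: h hk hP h3.
  generalize (Pf (2 ^ d) l j) (Kf (2 ^ d) l (idx (2 ^ d) u) N v j) (2 ^ (l * d + d - 1))%N (2 ^ (d - 1))%N.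
  move=> P K X Y h hk hP h3.
  apply: leq_trans (ltnW h) _. rewrite -mulnA. apply: leq_mul => //.
  apply: (@leq_trans (2 * K)); first lia. by apply: leq_mul.
move=> hvol hbd.
have hK := Kpos 0%N 0%N (leq0n d). rewrite Kf0 in hK.
have hab : forall j, a j < b j.
  move=> j. rewrite ltNge; apply/negP => hj.
  have : vol a b = 0 by rewrite /vol (bigD1 j) //= max_r ?subr_le0 // mul0r.
  rewrite hvol Mcount_cnt ?hsz //; last by apply: leq_trans hd.
  move/eqP. by rewrite mulf_eq0 invr_eq0 !pnatr_eq0 (gtn_eqF hK) (gtn_eqF N0).
exact: (core R d a b (2 ^ d) l (idx (2 ^ d) u) N (ltnW B1) hiu Kpos hab u hd erefl hsz hu erefl N0 Kbig hvol hbd).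
Qed.
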